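(* Let $L$ be a finitely additive expectation on a linear space $\mathcal{L}=\{X_i:i\in I\}$ of real-valued functions on $\Omega$ containing all constants. Then the collection of marginal previsions $P(X_i)=L(X_i)$, $i\in I$, is coherent$_1$.
   Context: Random variables are real-valued functions on a nonempty set $\Omega$. A finitely additive expectation on a linear space $\mathcal{L}$ containing all constants is a map $L:\mathcal{L}\to\mathbb{R}\cup\{\pm\infty\}$ that is nonnegative ($X\le Y$ implies $L(X)\le L(Y)$), extended-linear ($L(\alpha X+\beta Y)=\alpha L(X)+\beta L(Y)$ for all real $\alpha,\beta$ whenever the right side is not of the form $\infty-\infty$, with $0\times(\pm\infty)=0$), and satisfies $L(1)=1$. Coherence$_1$ (marginal case): $\{P(X_i):i\in I\}$ is coherent$_1$ if for every finite $\{i_1,\dots,i_n\}\subseteq I$, all real $\alpha_1,\dots,\alpha_n$ with $\alpha_j\ge0$ whenever $P(X_{i_j})=+\infty$ and $\alpha_j\le0$ whenever $P(X_{i_j})=-\infty$, and all real $c_1,\dots,c_n$ with $c_j=P(X_{i_j})$ whenever it is finite, $\sup_\omega\sum_{j=1}^n\alpha_j[X_{i_j}(\omega)-c_j]\ge0$. *)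

(* Defs.v *)
From HB Require Import structures.
From mathcomp Require Import all_boot all_order all_algebra.
From mathcomp Require Import all_classical all_reals.
From mathcomp Require Import ereal.
Set Implicit Arguments. Unset Strict Implicit. Unset Printing Implicit Defensive.
Import Order.TTheory GRing.Theory Num.Theory.
Local Open Scope classical_set_scope.
Local Open Scope ring_scope.
Local Open Scope ereal_scope.

Definition linear_space_with_constants (R : realType) (Omega : Type)
  (Lsp : set (Omega -> R)) : Prop :=
  (forall c : R, Lsp (fun _ => c)) /\
  (forall (X Y : Omega -> R) (a b : R), Lsp X -> Lsp Y ->
      Lsp (fun w => (a * X w + b * Y w)%R)).

(* Finitely additive expectation on Lsp (0 * (+-oo) = 0 holds in \bar R). *)
Definition fa_expectation (R : realType) (Omega : Type)
  (Lsp : set (Omega -> R)) (L : (Omega -> R) -> \bar R) : Prop :=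
  (forall X Y, Lsp X -> Lsp Y -> (forall w, (X w <= Y w)%R) -> L X <= L Y) /\
  (forall X Y (a b : R), Lsp X -> Lsp Y ->
     ~ ((a%:E * L X = +oo /\ b%:E * L Y = -oo) \/
        (a%:E * L X = -oo /\ b%:E * L Y = +oo)) ->
     L (fun w => (a * X w + b * Y w)%R) = a%:E * L X + b%:E * L Y) /\
  L (fun _ => 1%R) = 1.

Definition coherent1 (R : realType) (Omega : Type) (I : Type)
  (X : I -> Omega -> R) (P : I -> \bar R) : Prop :=
  forall (n : nat) (idx : 'I_n -> I) (alpha c : 'I_n -> R),
    injective idx ->
    (forall j, P (idx j) = +oo -> (0 <= alpha j)%R) ->
    (forall j, P (idx j) = -oo -> (alpha j <= 0)%R) ->
    (forall j, P (idx j) \is a fin_num -> P (idx j) = (c j)%:E) ->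
    0 <= ereal_sup [set (\sum_(j < n) alpha j * (X (idx j) w - c j))%R%:E
                    | w in [set: Omega]].

(* Main.v *)
Require Import Defs.
From HB Require Import structures.
From mathcomp Require Import all_boot all_order all_algebra.
From mathcomp Require Import all_classical all_reals.
From mathcomp Require Import ereal.
Import Order.TTheory GRing.Theory Num.Theory.
Local Open Scope classical_set_scope.
Local Open Scope ring_scope.
Local Open Scope ereal_scope.

Section Aux.
Variables (R : realType) (Omega : Type) (Lsp : set (Omega -> R))
  (L : (Omega -> R) -> \bar R).
Hypothesis hLsp : linear_space_with_constants Lsp.
Hypothesis hL : fa_expectation Lsp L.

Lemma Lconst (c : R) : L (fun _ => c) = c%:E.
Proof.
have [_ [hlin h1]] := hL.
have -> : (fun _ : Omega => c) = (fun w => c * (fun _ => 1%R) w + 0 * (fun _ => 1%R) w)%R.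
  by apply: funext => w /=; rewrite mulr1 mul0r addr0.
rewrite hlin ?h1; first by rewrite mul0e adde0 mule1.
- exact: hLsp.1.
- exact: hLsp.1.
by rewrite mul0e; case => -[].
Qed.

Lemma sum_nonneg (I : Type) (r : seq I) (f : I -> Omega -> R) :
  (forall j, Lsp (f j) /\ 0 <= L (f j)) ->
  Lsp (fun w => (\sum_(j <- r) f j w)%R) /\ 0 <= L (fun w => (\sum_(j <- r) f j w)%R).
Proof.
move=> hf; elim: r => [|a r [IHs IHl]].
  have -> : (fun w : Omega => (\sum_(j <- [::]) f j w)%R) = (fun _ => 0%R).
    by apply: funext => w; rewrite big_nil.
  by split; [exact: hLsp.1 | rewrite Lconst].
have -> : (fun w => (\sum_(j <- a :: r) f j w)%R) =
   (fun w => 1 * f a w + 1 * (fun w => (\sum_(j <- r) f j w)%R) w)%R.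
  by apply: funext => w; rewrite big_cons !mul1r.
have [ha hla] := hf a.
split; first exact: hLsp.2.
rewrite hL.2.1 //; last first.
  rewrite !mul1e => -[[_ h]|[h _]]; rewrite h in IHl hla => //.
by rewrite !mul1e adde_ge0.
Qed.

Lemma term_nonneg (X : Omega -> R) (a c : R) : Lsp X ->
  (L X = +oo -> (0 <= a)%R) -> (L X = -oo -> (a <= 0)%R) ->
  (L X \is a fin_num -> L X = c%:E) ->
  Lsp (fun w => a * (X w - c))%R /\ 0 <= L (fun w => a * (X w - c))%R.
Proof.
move=> hX hp hn hc.
have -> : (fun w => a * (X w - c))%R = (fun w => a * X w + (- (a * c)) * (fun _ => 1%R) w)%R.
  by apply: funext => w /=; rewrite mulr1 mulrBr.
have h1 : Lsp (fun _ => 1%R) by exact: hLsp.1.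
split; first exact: hLsp.2.
rewrite hL.2.1 //; last by rewrite Lconst mule1; case => -[].
rewrite Lconst mule1.
case hLX: (L X) hp hn hc => [r| |] hp hn hc.
- by have := hc isT => -[->]; rewrite -EFinM -EFinD subrr.
- have := hp erefl; rewrite le_eqVlt => /orP[/eqP <-|ha].
    by rewrite mul0e mul0r oppr0 adde0.
  by rewrite mulry gtr0_sg // mul1e leey.
- have := hn erefl; rewrite le_eqVlt => /orP[/eqP ->|ha].
    by rewrite mul0e mul0r oppr0 adde0.
  by rewrite mulrNy ltr0_sg // mulN1e leey.
Qed.
End Aux.

Theorem lemma5p2 (R : realType) (Omega : Type) (hOmega : inhabited Omega)
  (Lsp : set (Omega -> R)) (L : (Omega -> R) -> \bar R)
  (hLsp : linear_space_with_constants Lsp)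
  (hL : fa_expectation Lsp L) :
  coherent1 (fun i : {X : Omega -> R | Lsp X} => proj1_sig i)
            (fun i => L (proj1_sig i)).
Proof.
move=> n idx alpha c _ hp hn hc.
set Z := fun w => (\sum_(j < n) alpha j * (proj1_sig (idx j) w - c j))%R.
have [hZ hLZ] : Lsp Z /\ 0 <= L Z.
  have := @sum_nonneg _ _ _ _ hLsp hL _ (index_enum 'I_n)
    (fun j w => alpha j * (proj1_sig (idx j) w - c j))%R.
  rewrite /Z; apply => j.
  exact: (@term_nonneg _ _ _ _ hLsp hL _ _ _ (proj2_sig (idx j)) (hp j) (hn j) (hc j)).
apply: contrapT; move/negP; rewrite -ltNge => hs.
case: hOmega => w0.
have hw0 : (Z w0)%:E <= ereal_sup [set (Z w)%:E | w in [set: Omega]].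
  by apply: ereal_sup_ubound; exists w0.
set S := ereal_sup _ in hw0 hs.
have hfin : S \is a fin_num.
  rewrite fin_numE; apply/andP; split.
    by apply/eqP => h; rewrite h in hw0; rewrite leeNy_eq in hw0.
  by apply/eqP => h; rewrite h in hs.
have hub : forall w, (Z w <= fine S)%R.
  move=> w; rewrite -lee_fin fineK //.
  by apply: ereal_sup_ubound; exists w.
have : L Z <= L (fun _ => fine S).
  apply: hL.1 => //; exact: hLsp.1.
rewrite (@Lconst _ _ _ _ hLsp hL) fineK // => h.
by have := le_lt_trans hLZ (le_lt_trans h hs); rewrite ltxx.
Qed.
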